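(* Let $d=2$, let $M\ge1$ be a real number, let $\alpha,\lambda\in\overline{\mathbb Q}$, and let $|\cdot|_v$ be an absolute value on $\overline{\mathbb Q}$. If $|\alpha|_v\ge\frac{1}{M\cdot|\lambda|_v}\ge2M$, then for all integers $0\le n_0\le n$, $$\left|\frac{\log M_{n,v}}{2^n}-\frac{\log M_{n_0,v}}{2^{n_0}}\right|\le4\log 2.$$
   Context: Define $A_0=\alpha$, $B_0=1$, and for $n\ge0$, $A_{n+1}=A_n^2+\lambda B_n^2$, $B_{n+1}=A_nB_n$ (so $[A_n:B_n]$ is the $n$-th iterate of $\alpha$ under $z\mapsto(z^2+\lambda)/z$). Set $M_{n,v}=\max\{|A_n|_v,|B_n|_v\}$. *)

(* Defs.v *)
From mathcomp Require Import all_boot all_order all_algebra all_field.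
From mathcomp Require Import all_classical all_reals all_analysis.

Set Implicit Arguments. Unset Strict Implicit. Unset Printing Implicit Defensive.
Import Order.TTheory GRing.Theory Num.Theory.
Local Open Scope ring_scope.

Definition is_absval (R : realType) (f : algC -> R) : Prop :=
  (forall x : algC, 0 <= f x) /\
  (forall x : algC, f x = 0 <-> x = 0) /\
  (forall x y : algC, f (x * y) = f x * f y) /\
  (forall x y : algC, f (x + y) <= f x + f y).

Fixpoint AB (alpha lambda : algC) (n : nat) : algC * algC :=
  match n with
  | O => (alpha, 1)
  | S m => let p := AB alpha lambda m in
           (p.1 ^+ 2 + lambda * p.2 ^+ 2, p.1 * p.2)
  end.

Definition A_seq alpha lambda n := (AB alpha lambda n).1.
Definition B_seq alpha lambda n := (AB alpha lambda n).2.

Definition Mnv (R : realType) (v : algC -> R) alpha lambda n : R :=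
  Num.max (v (A_seq alpha lambda n)) (v (B_seq alpha lambda n)).

(* Main.v *)
Require Import Defs.
From mathcomp Require Import all_boot all_order all_algebra all_field.
From mathcomp Require Import all_classical all_reals all_analysis.
From mathcomp Require Import ring lra.
Import Order.TTheory GRing.Theory Num.Theory.
Local Open Scope ring_scope.

Lemma mono_nat (R : realType) (f : nat -> R) :
  (forall k, f k <= f k.+1) -> forall m n, (m <= n)%N -> f m <= f n.
Proof.
move=> h m n /subnKC <-; elim: (n - m)%N => [|d ih]; first by rewrite addn0.
by rewrite addnS; exact: le_trans ih (h _).
Qed.

Lemma log_part (R : realType) (m : nat -> R) :
  (forall k, 0 < m k) ->
  (forall k, m k.+1 <= 2 * m k ^+ 2) ->
  (forall k, m k ^+ 2 <= 2 ^+ k.+1 * m k.+1) ->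
  forall n0 n : nat, (n0 <= n)%N ->
  `| ln (m n) / 2 ^+ n - ln (m n0) / 2 ^+ n0 | <= 4 * ln (2:R).
Proof.
move=> hpos hup hlo.
set L := ln (2:R).
have L0 : 0 < L by apply: ln_gt0; lra.
have p0 k : 0 < (2:R) ^+ k by apply: exprn_gt0.
have up k : ln (m k.+1) <= L + 2 * ln (m k).
  have -> : L + 2 * ln (m k) = ln (2 * m k ^+ 2).
    by rewrite lnM ?posrE ?exprn_gt0 // lnXn // mulr_natl.
  by rewrite ler_ln ?posrE ?mulr_gt0 ?exprn_gt0.
have lo k : 2 * ln (m k) <= k.+1%:R * L + ln (m k.+1).
  have -> : 2 * ln (m k) = ln (m k ^+ 2) by rewrite lnXn // mulr_natl.
  have -> : k.+1%:R * L + ln (m k.+1) = ln (2 ^+ k.+1 * m k.+1).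
    by rewrite lnM ?posrE ?exprn_gt0 // lnXn // mulr_natl.
  by rewrite ler_ln ?posrE ?mulr_gt0 ?exprn_gt0.
set u := fun k => ln (m k) / 2 ^+ k.
have H : forall k, u k.+1 + L / 2 ^+ k.+1 <= u k + L / 2 ^+ k.
  move=> k; rewrite /u exprS invfM -subr_ge0.
  have q0 : 0 < (2 ^+ k : R)^-1 by rewrite invr_gt0.
  move: (up k) q0; set q := (2 ^+ k : R)^-1; move=> h1 h2.
  have -> : ln (m k) * q + L * q - (ln (m k.+1) * (2^-1 * q) + L * (2^-1 * q))
     = (q / 2) * (L + 2 * ln (m k) - ln (m k.+1)) by field.
  apply: mulr_ge0; [apply: divr_ge0; lra | lra].
have G : forall k, u k - L * (k.+2)%:R / 2 ^+ k <= u k.+1 - L * (k.+3)%:R / 2 ^+ k.+1.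
  move=> k; rewrite /u exprS invfM -subr_ge0.
  have q0 : 0 < (2 ^+ k : R)^-1 by rewrite invr_gt0.
  move: (lo k) q0; set q := (2 ^+ k : R)^-1; move=> h1 h2.
  have -> : ln (m k.+1) * (2^-1 * q) - L * (k.+3)%:R * (2^-1 * q) - 
    (ln (m k) * q - L * (k.+2)%:R * q)
     = (q / 2) * (k.+1%:R * L + ln (m k.+1) - 2 * ln (m k)).
    by rewrite !mulrS; field.
  apply: mulr_ge0; [apply: divr_ge0; lra | lra].
move=> n0 n hn.
have Hm' : u n + L / 2 ^+ n <= u n0 + L / 2 ^+ n0.
  rewrite -lerN2; apply: (@mono_nat R (fun k => - (u k + L / 2 ^+ k))) hn.
  by move=> k; rewrite lerN2; apply: H.
have Gm := @mono_nat R (fun k => u k - L * (k.+2)%:R / 2 ^+ k) G _ _ hn.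
simpl in Gm.
have e1 : L / 2 ^+ n0 <= L.
  have t : 1 <= (2:R) ^+ n0 by apply: exprn_ege1; lra.
  rewrite ler_pdivrMr //; nra.
have e2 : 0 <= L / 2 ^+ n by apply: divr_ge0; [exact: ltW | exact: ltW].
have e3 : 0 <= L * (n.+2)%:R / 2 ^+ n.
  by apply: divr_ge0; [apply: mulr_ge0; [exact: ltW|] | exact: ltW].
have e4 : L * (n0.+2)%:R / 2 ^+ n0 <= 2 * L.
  rewrite ler_pdivrMr //.
  have hn0 : (n0.+2 <= 2 ^ n0.+1)%N by apply: ltn_expl.
  have : (n0.+2)%:R <= (2 ^ n0.+1)%:R :> R by rewrite ler_nat.
  rewrite natrX exprS => h; nra.
rewrite ler_norml; change (- (4 * L) <= u n - u n0 <= 4 * L); apply/andP; split; lra.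
Qed.
Lemma step_lo (R : realType) (x y x' l P : R) : 0 <= x -> 0 <= y -> 0 <= x' ->
  0 <= l -> l <= 1/2 -> 1 <= P ->
  x ^+ 2 <= x' + l * y ^+ 2 -> l * y ^+ 2 <= x' + x ^+ 2 -> (x < y -> 1 <= l * P) ->
  Num.max x y ^+ 2 <= 2 * P * Num.max x' (x * y).
Proof.
move=> x0 y0 x'0 l0 l2 P1 h1 h2 h3.
set N := Num.max x' (x * y).
have m1 : x' <= N by rewrite le_max lexx.
have m2 : x * y <= N by rewrite le_max lexx orbT.
set K := Num.max x y.
have K0 : 0 <= K by rewrite le_max x0.
have [hxy|hxy] := leP y x.
  have : K <= x by rewrite ge_max lexx hxy.
  have : x ^+ 2 <= 2 * x' by nra.
  nra.
have : K <= y by rewrite ge_max lexx (ltW hxy).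
have lP := h3 hxy.
have [hx|hx] := leP (l / 2 * y) x.
  have : l / 2 * y ^+ 2 <= N by nra.
  nra.
have : l / 2 * y ^+ 2 <= N by nra.
nra.
Qed.

Lemma step_up (R : realType) (x y x' l : R) : 0 <= x -> 0 <= y -> 0 <= x' ->
  0 <= l -> l <= 1/2 -> x' <= x ^+ 2 + l * y ^+ 2 ->
  Num.max x' (x * y) <= 2 * Num.max x y ^+ 2.
Proof.
move=> x0 y0 x'0 l0 l2 h1.
set N := Num.max x y.
have m1 : x <= N by rewrite le_max lexx.
have m2 : y <= N by rewrite le_max lexx orbT.
rewrite ge_max; apply/andP; split; nra.
Qed.
Section S.
Variables (R : realType) (v : algC -> R).
Hypothesis hv : is_absval v.

Lemma v_ge0 z : 0 <= v z. Proof. by case: hv. Qed.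
Lemma vM z w : v (z * w) = v z * v w. Proof. by case: hv => _ [_ []]. Qed.
Lemma vD z w : v (z + w) <= v z + v w. Proof. by case: hv => _ [_ [_]]. Qed.
Lemma v1 : v 1 = 1.
Proof.
have h : v 1 = v 1 * v 1 by rewrite -vM mulr1.
have n0 : v 1 != 0.
  apply/eqP => /(proj1 (proj1 (proj2 hv) 1)) /eqP; by rewrite oner_eq0.
by apply: (mulIf n0); rewrite mul1r -h.
Qed.
Lemma vN z : v (- z) = v z.
Proof.
have h : v (-1) * v (-1) = 1 by rewrite -vM mulrNN mulr1 v1.
have h0 := v_ge0 (-1).
have e : v (-1) = 1 by nra.
by rewrite -mulN1r vM e mul1r.
Qed.
Lemma vX2 z : v (z ^+ 2) = v z ^+ 2. Proof. by rewrite !expr2 vM. Qed.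
End S.

Theorem proposition6p2 (R : realType) (M : R) (alpha lambda : algC) (v : algC -> R) :
  is_absval v -> 1 <= M ->
  (M * v lambda)^-1 <= v alpha -> 2 * M <= (M * v lambda)^-1 ->
  forall n0 n : nat, (n0 <= n)%N ->
  `| ln (Mnv v alpha lambda n) / 2 ^+ n - ln (Mnv v alpha lambda n0) / 2 ^+ n0 |
     <= 4 * ln 2.
Proof.
move=> hv M1 ha hl.
set l := v lambda; set a := v alpha.
have l0 : 0 <= l by exact: v_ge0.
have Ml0 : M * l != 0.
  apply/eqP => e; move: hl; rewrite e invr0; lra.
set w := (M * l)^-1 in ha hl.
have hw : w * (M * l) = 1 by rewrite mulVf.
have lpos : 0 < l.
  rewrite lt_def; apply/andP; split=> //; apply/eqP => e; move: Ml0; rewrite e mulr0 eqxx //.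
have e : (2 * M) * (M * l) <= w * (M * l).
  by rewrite ler_wpM2r // mulr_ge0 //; lra.
rewrite hw in e.
have Ml : 0 <= M * l by apply: mulr_ge0 => //; lra.
have l2 : l <= 1/2.
  have h1 : 0 <= (M - 1) * l by apply: mulr_ge0 => //; lra.
  have h2 : 0 <= (M - 1) * (M * l) by apply: mulr_ge0 => //; lra.
  rewrite mulrBl mul1r in h1; rewrite mulrBl mul1r in h2.
  have : 2 * M * (M * l) = 2 * (M * (M * l)) by ring.
  lra.
have a2 : 2 <= a by rewrite /a; lra.
set x := fun k => v (A_seq alpha lambda k).
set y := fun k => v (B_seq alpha lambda k).
have x0 k : 0 <= x k by exact: v_ge0.
have y0 k : 0 <= y k by exact: v_ge0.
have eA k : A_seq alpha lambda k.+1 =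
   A_seq alpha lambda k ^+ 2 + lambda * B_seq alpha lambda k ^+ 2 by [].
have eB k : B_seq alpha lambda k.+1 = A_seq alpha lambda k * B_seq alpha lambda k by [].
have ry k : y k.+1 = x k * y k by rewrite /y /x eB vM.
have rx_up k : x k.+1 <= x k ^+ 2 + l * y k ^+ 2.
  rewrite /x /y eA -!vX2 // -vM //; exact: vD.
have rx_lo1 k : x k ^+ 2 <= x k.+1 + l * y k ^+ 2.
  rewrite /x /y eA -!vX2 // -vM //.
  set A := A_seq _ _ _; set B := B_seq _ _ _.
  have := @vD R v hv (A ^+ 2 + lambda * B ^+ 2) (- (lambda * B ^+ 2)).
  by rewrite (@vN R v hv) addrK.
have rx_lo2 k : l * y k ^+ 2 <= x k.+1 + x k ^+ 2.
  rewrite /x /y eA -!vX2 // -vM //.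
  set A := A_seq _ _ _; set B := B_seq _ _ _.
  have := @vD R v hv (A ^+ 2 + lambda * B ^+ 2) (- (A ^+ 2)).
  by rewrite (@vN R v hv) addrC addKr.
have inv k : 1 <= a - k%:R * l -> (a - k%:R * l) * y k <= x k.
  elim: k => [|k IH].
    by move=> _; rewrite /x /y /= /A_seq /B_seq /= v1 // mulr1 mul0r subr0.
  move=> hk.
  have hk' : 1 <= a - k%:R * l by rewrite mulrSr in hk; lra.
  have ih := IH hk'.
  rewrite ry mulrSr.
  have h1 := rx_lo1 k.
  move: (x0 k) (y0 k) ih hk'; set s := a - k%:R * l; set X := x k; set Y := y k.
  move=> X0 Y0 ih hs.
  have -> : a - (k%:R + 1) * l = s - l by rewrite /s; ring.
  have : 0 <= (X - s * Y) * (X + l * Y) + l * (s - 1) * Y ^+ 2.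
    apply: addr_ge0; [apply: mulr_ge0; nra | apply: mulr_ge0; nra].
  have -> : (X - s * Y) * (X + l * Y) + l * (s - 1) * Y ^+ 2
     = X ^+ 2 - (s - l) * (X * Y) - l * Y ^+ 2 by ring.
  move: h1; rewrite -/X -/Y; lra.
have bad k : x k < y k -> 1 <= l * 2 ^+ k.
  move=> hxy.
  have hk : a - k%:R * l < 1.
    rewrite ltNge; apply/negP => h; have := inv k h; move: (y0 k); nra.
  have hk2 : (k%:R : R) <= 2 ^+ k.
    have : (k <= 2 ^ k)%N by apply: ltnW; apply: ltn_expl.
    by rewrite -(ler_nat R) natrX.
  nra.
set m := Mnv v alpha lambda.
have mE k : m k = Num.max (x k) (y k) by [].
have hlo k : m k ^+ 2 <= 2 ^+ k.+1 * m k.+1.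
  rewrite !mE ry (exprS (2:R) k); apply: (@step_lo R (x k) (y k) (x k.+1) l) => //.
  - by apply: exprn_ege1; lra.
  - exact: bad.
have hup k : m k.+1 <= 2 * m k ^+ 2.
  rewrite !mE ry; apply: (@step_up _ _ _ _ l) => //.
have hpos k : 0 < m k.
  elim: k => [|k IH].
    rewrite mE; apply: lt_le_trans (_ : 0 < 1) _ => //.
    by rewrite le_max /y /= /B_seq /= v1 // lexx orbT.
  have := hlo k; have : 0 < (2:R) ^+ k.+1 by apply: exprn_gt0.
  have : 0 <= m k.+1 by rewrite mE le_max x0.
  nra.
exact: log_part.
Qed.
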